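(* There is an absolute constant $c_0<10$ such that for each $b\in(0,\pi)$, each $n\in\mathbb{N}$ and every odd trigonometric polynomial $T_n\in\mathcal{T}_n$, $$\|T_n'\|_{[-b/2,b/2]}\le \frac{c_0}{b}\,n\,\|T_n\|_{[-b,b]}.$$
   Context: $\mathcal{T}_n$ is the space of real trigonometric polynomials $\alpha_0+\sum_{k=1}^n(\alpha_k\cos kt+\beta_k\sin kt)$ of degree $\le n$. For a function $g$ on $[a,b]$, $\|g\|_{[a,b]}:=\max_{x\in[a,b]}|g(x)|$. *)

(* Defs.v *)
From Stdlib Require Import Reals.
From Coquelicot Require Import Coquelicot.
Open Scope R_scope.

Fixpoint trig_sum (al be : nat -> R) (n : nat) (t : R) : R :=
  match n with
  | O => 0
  | S m => trig_sum al be m t + (al (S m) * cos (INR (S m) * t) + be (S m) * sin (INR (S m) * t))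
  end.

Definition in_Tn (n : nat) (f : R -> R) : Prop :=
  exists al be : nat -> R, forall t, f t = al 0%nat + trig_sum al be n t.

Definition odd_fun (f : R -> R) : Prop := forall t, f (- t) = - f t.

(* Main.v *)
Require Import Defs.
From Stdlib Require Import Reals Lra Lia.
From Coquelicot Require Import Coquelicot.
Open Scope R_scope.

Fixpoint sk (f : nat -> R) (m : nat) : R :=
  match m with O => 0 | S m => sk f m + f m end.

Lemma sk_ext f g m : (forall k, (k < m)%nat -> f k = g k) -> sk f m = sk g m.
Proof. induction m; simpl; intros H; auto. rewrite IHm, H; auto. Qed.

Lemma sk_lin a b f g m :
  sk (fun k => a * f k + b * g k) m = a * sk f m + b * sk g m.
Proof. induction m; simpl. ring. rewrite IHm; ring. Qed.

Lemma sk_scal a f m : sk (fun k => a * f k) m = a * sk f m.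
Proof. induction m; simpl. ring. rewrite IHm; ring. Qed.

Lemma sk_plus f g m : sk (fun k => f k + g k) m = sk f m + sk g m.
Proof. induction m; simpl. ring. rewrite IHm; ring. Qed.

Lemma sk_const c m : sk (fun _ => c) m = INR m * c.
Proof. induction m; simpl sk. simpl; ring. rewrite IHm, S_INR; ring. Qed.

Lemma sk_abs f m : Rabs (sk f m) <= sk (fun k => Rabs (f k)) m.
Proof. induction m; simpl. rewrite Rabs_R0; lra.
  eapply Rle_trans. apply Rabs_triang. lra. Qed.

Lemma sk_le f g m : (forall k, (k < m)%nat -> f k <= g k) -> sk f m <= sk g m.
Proof. induction m; simpl; intros H. lra. 
  assert (f m <= g m) by (apply H; lia). assert (sk f m <= sk g m) by (apply IHm; intros; apply H; lia). lra. Qed.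

Lemma sk_shift g m : sk g (S m) = g O + sk (fun k => g (S k)) m.
Proof. induction m. simpl; ring. change (sk g (S (S m))) with (sk g (S m) + g (S m)).
  rewrite IHm. simpl. ring. Qed.

Lemma sk_rev f m : sk f m = sk (fun k => f (m - 1 - k)%nat) m.
Proof. revert f; induction m; intros f. reflexivity.
  rewrite (sk_shift (fun k => f (S m - 1 - k)%nat)). change (sk f (S m)) with (sk f m + f m). rewrite (IHm f).
  replace (S m - 1 - 0)%nat with m by lia.
  rewrite (sk_ext (fun k => f (S m - 1 - S k)%nat) (fun k => f (m - 1 - k)%nat)).
  ring. intros; f_equal; lia. Qed.

Lemma sk_tele F m : sk (fun k => F (S k) - F k) m = F m - F O.
Proof. induction m; simpl. ring. rewrite IHm; ring. Qed.

Lemma sin_nPI k : sin (INR k * PI) = 0.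
Proof. induction k. simpl. rewrite Rmult_0_l; apply sin_0.
  rewrite S_INR, Rmult_plus_distr_r, Rmult_1_l, neg_sin, IHk; ring. Qed.

Lemma cos_nPI k : cos (INR k * PI) = (-1)^k.
Proof. induction k. simpl. rewrite Rmult_0_l; apply cos_0.
  rewrite S_INR, Rmult_plus_distr_r, Rmult_1_l, neg_cos, IHk; simpl; ring. Qed.

Lemma sin_half_odd k : sin ((2 * INR k + 1) * PI / 2) = (-1)^k.
Proof. replace ((2 * INR k + 1) * PI / 2) with (INR k * PI + PI/2) by field.
  rewrite sin_plus, sin_nPI, cos_nPI, sin_PI2, cos_PI2; ring. Qed.

Lemma cos_half_odd k : cos ((2 * INR k + 1) * PI / 2) = 0.
Proof. replace ((2 * INR k + 1) * PI / 2) with (INR k * PI + PI/2) by field.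
  rewrite cos_plus, sin_nPI, cos_nPI, sin_PI2, cos_PI2; ring. Qed.

Lemma m1pow_sq k : (-1)^k * (-1)^k = 1.
Proof. rewrite <- pow_add. replace (k+k)%nat with (2*k)%nat by lia. apply pow_1_even. Qed.

Lemma m1pow_abs k : Rabs ((-1)^k) = 1.
Proof. rewrite <- RPow_abs, Rabs_m1, pow1. reflexivity. Qed.

Definition tk (N k : nat) : R := (2 * INR k + 1) * PI / (2 * INR N).
Definition sq (x : R) := x * x.
Definition Asum N j := sk (fun k => (-1)^k * sin (INR j * tk N k) / sq (sin (tk N k / 2))) (2*N).
Definition Bsum N j := sk (fun k => (-1)^k * sin (INR j * tk N k)) (2*N).
Definition Csum N j := sk (fun k => (-1)^k * cos (INR j * tk N k) / sq (sin (tk N k / 2))) (2*N).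

Lemma INR_N_pos N : (1 <= N)%nat -> 1 <= INR N.
Proof. intros; apply (le_INR 1); auto. Qed.

Lemma sin_tk_pos N k : (1 <= N)%nat -> (k < 2*N)%nat -> 0 < sin (tk N k / 2).
Proof. intros HN Hk. apply sin_gt_0.
  - unfold tk. pose proof (pos_INR k). pose proof (INR_N_pos N HN). pose proof PI_RGT_0.
    apply Rmult_lt_reg_r with (4 * INR N). lra. field_simplify; try lra. nra.
  - unfold tk. pose proof (pos_INR k). pose proof (INR_N_pos N HN). pose proof PI_RGT_0.
    assert (INR (S k) <= INR (2*N)) by (apply le_INR; lia). rewrite S_INR, mult_INR in H2. simpl in H2.
    apply Rmult_lt_reg_r with (4 * INR N). lra. field_simplify; try lra. nra.
Qed.

Lemma Bsum_zero N j : (1 <= N)%nat -> (j < N)%nat -> Bsum N j = 0.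
Proof. intros HN Hj. pose proof (INR_N_pos N HN).
  set (th := INR j * PI / INR N).
  set (F := fun k => (-1)^k * sin (INR k * th)).
  assert (Hc : 0 < cos (th / 2)).
  { apply cos_gt_0; unfold th; pose proof (pos_INR j); pose proof PI_RGT_0.
    - apply Rlt_le_trans with 0. lra. unfold Rdiv. apply Rmult_le_pos; [|lra].
      apply Rmult_le_pos; [nra|]. left; apply Rinv_0_lt_compat; lra.
    - assert (INR (S j) <= INR N) by (apply le_INR; lia). rewrite S_INR in H2.
      apply Rmult_lt_reg_r with (2 * INR N). lra. field_simplify; try lra. nra. }
  assert (Ht : sk (fun k => F (S k) - F k) (2*N) = 0).
  { rewrite sk_tele. unfold F. simpl pow at 2. rewrite Rmult_0_l, sin_0.
    replace (INR (2*N) * th) with (INR (2*j) * PI).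
    rewrite sin_nPI. ring. unfold th. rewrite !mult_INR. simpl. field. lra. }
  assert (Hp : sk (fun k => F (S k) - F k) (2*N) = (- (2 * cos (th/2))) * Bsum N j).
  { unfold Bsum. rewrite <- sk_scal. apply sk_ext. intros k _. unfold F.
    replace (INR j * tk N k) with ((2 * INR k + 1) * th / 2).
    2:{ unfold tk, th. field. lra. }
    replace (INR (S k) * th) with ((2 * INR k + 1) * th / 2 + th/2) by (rewrite S_INR; field).
    replace (INR k * th) with ((2 * INR k + 1) * th / 2 - th/2) by field.
    rewrite sin_plus, sin_minus. simpl pow. ring. }
  rewrite Ht in Hp. symmetry in Hp. apply Rmult_integral in Hp as [H1|H1]. lra. auto.
Qed.

Lemma sk_comb3 f g h m : sk f m - 2 * sk g m + sk h m = sk (fun k => f k - 2 * g k + h k) m.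
Proof. induction m; simpl. ring. rewrite <- IHm. ring. Qed.

Lemma Asum_diff N j : (1 <= N)%nat ->
  Asum N (S (S j)) - 2 * Asum N (S j) + Asum N j = -4 * Bsum N (S j).
Proof. intros HN. unfold Asum, Bsum. rewrite sk_comb3, <- sk_scal. apply sk_ext.
  intros k Hk. pose proof (sin_tk_pos N k HN Hk). set (t := tk N k) in *.
  assert (Hc: cos t = 1 - 2 * sq (sin (t/2))).
  { replace t with (2 * (t/2)) at 1 by field. rewrite cos_2a_sin. unfold sq; ring. }
  replace (INR (S (S j)) * t) with (INR (S j) * t + t) by (rewrite !S_INR; ring).
  replace (INR j * t) with (INR (S j) * t - t) by (rewrite !S_INR; ring).
  rewrite sin_plus, sin_minus, Hc. unfold sq in *. field. lra. Qed.

Lemma Asum_0 N : Asum N 0 = 0.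
Proof. unfold Asum. rewrite (sk_ext _ (fun _ => 0)). rewrite sk_const; ring.
  intros k _. simpl INR. rewrite Rmult_0_l, sin_0. unfold Rdiv; ring. Qed.

Lemma Asum_lin N : (1 <= N)%nat -> forall j, (j <= N)%nat -> Asum N j = INR j * Asum N 1.
Proof. intros HN.
  assert (forall j, (S j <= N)%nat -> Asum N j = INR j * Asum N 1 /\ Asum N (S j) = INR (S j) * Asum N 1).
  { induction j; intros Hj. split. rewrite Asum_0; simpl; ring. simpl; ring.
    destruct IHj as [H1 H2]. lia. split. auto.
    pose proof (Asum_diff N j HN). rewrite (Bsum_zero N (S j) HN) in H. 2: lia.
    rewrite !S_INR in *. rewrite H1, H2 in H. lra. }
  intros j Hj. destruct j. rewrite Asum_0; simpl; ring.
  apply H. lia. Qed.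

Lemma Bsum_N N : (1 <= N)%nat -> Bsum N N = 2 * INR N.
Proof. intros HN. pose proof (INR_N_pos N HN). unfold Bsum.
  rewrite (sk_ext _ (fun _ => 1)). rewrite sk_const, mult_INR; simpl; ring.
  intros k _. replace (INR N * tk N k) with ((2 * INR k + 1) * PI / 2).
  rewrite sin_half_odd. apply m1pow_sq. unfold tk; field; lra. Qed.

Lemma Asum_Np1 N : (1 <= N)%nat -> Asum N (S N) = Asum N N - 4 * INR N.
Proof. intros HN. pose proof (INR_N_pos N HN). unfold Asum.
  replace (4 * INR N) with (INR (2*N) * 2) by (rewrite mult_INR; simpl; ring).
  rewrite <- sk_const. 
  replace (sk (fun k => (-1) ^ k * sin (INR N * tk N k) / sq (sin (tk N k / 2))) (2 * N) - sk (fun _ => 2) (2 * N))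
    with (sk (fun k => (-1) ^ k * sin (INR N * tk N k) / sq (sin (tk N k / 2)) + (-1) * 2) (2 * N))
    by (rewrite sk_plus, sk_scal; ring).
  apply sk_ext. intros k Hk. pose proof (sin_tk_pos N k HN Hk). 
  assert (HNt : INR N * tk N k = (2 * INR k + 1) * PI / 2) by (unfold tk; field; lra).
  set (t := tk N k) in *.
  assert (Hc: cos t = 1 - 2 * sq (sin (t/2))).
  { replace t with (2 * (t/2)) at 1 by field. rewrite cos_2a_sin. unfold sq; ring. }
  replace (INR (S N) * t) with (INR N * t + t) by (rewrite !S_INR; ring).
  rewrite sin_plus, HNt, sin_half_odd, cos_half_odd, Hc.
  pose proof (m1pow_sq k). unfold sq in *.
  replace ((-1) ^ k * ((-1) ^ k * (1 - 2 * (sin (t / 2) * sin (t / 2))) + 0 * sin t))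
    with (((-1) ^ k * (-1) ^ k) * (1 - 2 * (sin (t / 2) * sin (t / 2)))) by ring.
  rewrite H1. field. lra. Qed.

Lemma Asum_val N : (1 <= N)%nat -> forall j, (j <= N)%nat -> Asum N j = 4 * INR N * INR j.
Proof. intros HN j Hj. pose proof (INR_N_pos N HN).
  destruct N as [|N']. lia.
  pose proof (Asum_diff (S N') N' HN). rewrite Bsum_N in H0 by auto.
  rewrite Asum_Np1 in H0 by auto.
  rewrite (Asum_lin (S N') HN (S N')) in H0 by lia.
  rewrite (Asum_lin (S N') HN N') in H0 by lia.
  rewrite (Asum_lin (S N') HN j) by lia. rewrite S_INR in *. nra. Qed.

Lemma Csum_zero N j : (1 <= N)%nat -> Csum N j = 0.
Proof. intros HN. pose proof (INR_N_pos N HN). unfold Csum.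
  set (f := fun k => (-1)^k * cos (INR j * tk N k) / sq (sin (tk N k / 2))).
  assert (sk f (2*N) = -1 * sk f (2*N)).
  { rewrite sk_rev at 1. rewrite <- sk_scal. apply sk_ext. intros k Hk.
    unfold f.
    assert (Hi : INR (2*N - 1 - k) = 2 * INR N - 1 - INR k).
    { assert (Heq : (2*N - 1 - k + k + 1 = 2*N)%nat) by lia.
      apply (f_equal INR) in Heq. rewrite !plus_INR, mult_INR in Heq. replace (INR 2) with 2 in Heq by (simpl; ring). replace (INR 1) with 1 in Heq by reflexivity. lra. }
    assert (Ht : tk N (2*N - 1 - k) = 2 * PI - tk N k).
    { unfold tk. rewrite Hi. field. lra. }
    assert (Hs : (-1)^(2*N-1-k) = - (-1)^k).
    { assert (Heq : (2*N - 1 - k + (k + 1) = 2*N)%nat) by lia.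
      assert (E: (-1)^(2*N-1-k) * (-1)^(k+1) = 1) by (rewrite <- pow_add, Heq; apply pow_1_even).
      rewrite (pow_add _ k 1), pow_1 in E. pose proof (m1pow_sq k). set (q := (-1)^(2*N-1-k)) in *. set (p := (-1)^k) in *. nra. }
    rewrite Ht, Hs.
    replace ((2 * PI - tk N k) / 2) with (PI - tk N k / 2) by field. rewrite sin_PI_x.
    replace (INR j * (2 * PI - tk N k)) with (INR (2*j) * PI - INR j * tk N k)
      by (rewrite mult_INR; simpl; ring).
    rewrite cos_minus, cos_nPI, sin_nPI, pow_1_even. unfold Rdiv. ring. }
  lra. Qed.

(* Riesz weights *)
Definition cw N k := (-1)^k / (4 * INR N * sq (sin (tk N k / 2))).

Lemma cw_cos N j : (1 <= N)%nat -> sk (fun k => cw N k * cos (INR j * tk N k)) (2*N) = 0.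
Proof. intros HN. pose proof (INR_N_pos N HN).
  transitivity (/ (4 * INR N) * Csum N j). 2: rewrite Csum_zero; auto; ring.
  unfold Csum. rewrite <- sk_scal. apply sk_ext. intros k Hk. pose proof (sin_tk_pos N k HN Hk).
  unfold cw, sq. field. split; lra. Qed.

Lemma cw_sin N j : (1 <= N)%nat -> (j <= N)%nat -> sk (fun k => cw N k * sin (INR j * tk N k)) (2*N) = INR j.
Proof. intros HN Hj. pose proof (INR_N_pos N HN).
  transitivity (/ (4 * INR N) * Asum N j). 2: rewrite Asum_val; auto; field; lra.
  unfold Asum. rewrite <- sk_scal. apply sk_ext. intros k Hk. pose proof (sin_tk_pos N k HN Hk).
  unfold cw, sq. field. split; lra. Qed.

Lemma cw_abs N : (1 <= N)%nat -> sk (fun k => Rabs (cw N k)) (2*N) = INR N.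
Proof. intros HN. pose proof (INR_N_pos N HN).
  rewrite <- (cw_sin N N HN (le_n _)). apply sk_ext. intros k Hk. pose proof (sin_tk_pos N k HN Hk).
  replace (INR N * tk N k) with ((2 * INR k + 1) * PI / 2) by (unfold tk; field; lra).
  rewrite sin_half_odd. unfold cw. unfold Rdiv. rewrite Rabs_mult, m1pow_abs, Rabs_inv.
  rewrite Rabs_pos_eq. 2: unfold sq; nra.
  pose proof (m1pow_sq k). set (w := / _). transitivity (((-1)^k * (-1)^k) * w). rewrite H1; ring. ring. Qed.


Lemma sk_lin3 f g h a b m : sk (fun k => f k + a * g k + b * h k) m = sk f m + a * sk g m + b * sk h m.
Proof. induction m; simpl. ring. rewrite IHm. ring. Qed.

Lemma is_derive_Rplus (f g : R -> R) x a b : is_derive f x a -> is_derive g x b -> is_derive (fun t => f t + g t) x (a + b).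
Proof. intros H1 H2. exact (is_derive_plus f g x a b H1 H2). Qed.

Lemma ts_deriv N al be m x : (1 <= N)%nat -> (m <= N)%nat ->
  is_derive (trig_sum al be m) x (sk (fun k => cw N k * trig_sum al be m (x + tk N k)) (2*N)).
Proof. intros HN. induction m; intros Hm.
  - simpl trig_sum. rewrite (sk_ext _ (fun _ => 0 * 0)). rewrite sk_scal, Rmult_0_l. auto_derive; auto.
    intros; ring.
  - set (j := INR (S m)).
    apply is_derive_ext with (f := fun t => trig_sum al be m t + (al (S m) * cos (j * t) + be (S m) * sin (j * t))).
    intros; reflexivity.
    replace (sk (fun k => cw N k * trig_sum al be (S m) (x + tk N k)) (2 * N))
      with (sk (fun k => cw N k * trig_sum al be m (x + tk N k)) (2 * N) +
            (al (S m) * (- j * sin (j * x)) + be (S m) * (j * cos (j * x)))).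
    apply is_derive_Rplus. apply IHm; lia.
    auto_derive. auto. ring.
    rewrite (sk_ext (fun k => cw N k * trig_sum al be (S m) (x + tk N k)) (fun k => cw N k * trig_sum al be m (x + tk N k)
        + (al (S m) * cos (j * x) + be (S m) * sin (j * x)) * (cw N k * cos (INR (S m) * tk N k))
        + (be (S m) * cos (j * x) - al (S m) * sin (j * x)) * (cw N k * sin (INR (S m) * tk N k)))).
    rewrite sk_lin3, cw_cos, cw_sin; auto. fold j. ring.
    intros k _. cbn [trig_sum]. fold j. replace (j * (x + tk N k)) with (j * x + j * tk N k) by ring.
    rewrite cos_plus, sin_plus. ring.
Qed.

Lemma bernstein N G M x D : (1 <= N)%nat -> in_Tn N G -> (forall y, Rabs (G y) <= M) ->
  is_derive G x D -> Rabs D <= INR N * M.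
Proof. intros HN [al [be HG]] HM HD.
  assert (H2 : is_derive G x (sk (fun k => cw N k * G (x + tk N k)) (2*N))).
  { apply is_derive_ext with (f := fun t => al O + trig_sum al be N t). intros; auto.
    replace (sk (fun k => cw N k * G (x + tk N k)) (2*N)) with
      (0 + sk (fun k => cw N k * trig_sum al be N (x + tk N k)) (2*N)).
    apply is_derive_Rplus. auto_derive; auto. apply ts_deriv; auto.
    rewrite (sk_ext (fun k => cw N k * G (x + tk N k)) (fun k => cw N k * trig_sum al be N (x + tk N k) + al O * (cw N k * cos (INR 0 * tk N k)) + 0 * (cw N k * cos (INR 0 * tk N k)))).
    rewrite sk_lin3, cw_cos; auto. ring.
    intros k _. rewrite HG. simpl INR. rewrite Rmult_0_l, cos_0. ring. }
  apply is_derive_unique in HD. apply is_derive_unique in H2. rewrite HD in H2. rewrite H2.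
  eapply Rle_trans. apply sk_abs.
  eapply Rle_trans. apply (sk_le _ (fun k => M * Rabs (cw N k))).
  intros k _. rewrite Rabs_mult, Rmult_comm. apply Rmult_le_compat_r. apply Rabs_pos. apply HM.
  rewrite sk_scal, cw_abs; auto. lra. Qed.

Lemma ts_ext al be al' be' N t : (forall i, (i <= N)%nat -> al' i = al i /\ be' i = be i) ->
  trig_sum al' be' N t = trig_sum al be N t.
Proof. induction N; intros H; simpl. auto. cbn [trig_sum]. rewrite IHN by (intros; apply H; lia).
  destruct (H (S N)) as [H1 H2]; auto. rewrite H1, H2; auto. Qed.

Lemma ts_lin al be al' be' c d N t :
  trig_sum (fun i => c * al i + d * al' i) (fun i => c * be i + d * be' i) N t
  = c * trig_sum al be N t + d * trig_sum al' be' N t.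
Proof. induction N; cbn [trig_sum]. ring. rewrite IHN. ring. Qed.

Lemma Tn_ext N f g : (forall t, f t = g t) -> in_Tn N f -> in_Tn N g.
Proof. intros H [al [be Hf]]. exists al, be. intros t. rewrite <- H; auto. Qed.

Lemma Tn_lin N f g c d : in_Tn N f -> in_Tn N g -> in_Tn N (fun t => c * f t + d * g t).
Proof. intros [al [be Hf]] [al' [be' Hg]].
  exists (fun i => c * al i + d * al' i), (fun i => c * be i + d * be' i).
  intros t. rewrite ts_lin, Hf, Hg. ring. Qed.

Lemma Tn_S N f : in_Tn N f -> in_Tn (S N) f.
Proof. intros [al [be Hf]].
  exists (fun i => if Nat.eqb i (S N) then 0 else al i), (fun i => if Nat.eqb i (S N) then 0 else be i).
  intros t. cbn [trig_sum]. rewrite Nat.eqb_refl. rewrite (ts_ext al be). 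
  replace (Nat.eqb 0 (S N)) with false by reflexivity. rewrite Hf; ring.
  intros i Hi. replace (Nat.eqb i (S N)) with false. auto. symmetry. apply Nat.eqb_neq. lia. Qed.

Lemma Tn_le N N' f : (N <= N')%nat -> in_Tn N f -> in_Tn N' f.
Proof. induction 1; auto. intros; apply Tn_S; auto. Qed.

Lemma Tn_cos N k c : (k <= N)%nat -> in_Tn N (fun t => c * cos (INR k * t)).
Proof. intros Hk. apply Tn_le with k; auto. destruct k.
  - exists (fun _ => c), (fun _ => 0). intros t. simpl. rewrite Rmult_0_l, cos_0. ring.
  - exists (fun i => if Nat.eqb i (S k) then c else 0), (fun _ => 0).
    intros t. cbn [trig_sum]. rewrite Nat.eqb_refl. rewrite (ts_ext (fun _ => 0) (fun _ => 0)).
    replace (Nat.eqb 0 (S k)) with false by reflexivity.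
    assert (forall t, trig_sum (fun _ => 0) (fun _ => 0) k t = 0).
    { clear. induction k; intros; cbn [trig_sum]. auto. rewrite IHk; ring. }
    rewrite H; ring.
    intros i Hi. replace (Nat.eqb i (S k)) with false. auto. symmetry. apply Nat.eqb_neq. lia. Qed.

Lemma Tn_sin N k c : (k <= N)%nat -> in_Tn N (fun t => c * sin (INR k * t)).
Proof. intros Hk. apply Tn_le with k; auto. destruct k.
  - exists (fun _ => 0), (fun _ => 0). intros t. simpl. rewrite Rmult_0_l, sin_0. ring.
  - exists (fun _ => 0), (fun i => if Nat.eqb i (S k) then c else 0).
    intros t. cbn [trig_sum]. rewrite Nat.eqb_refl. rewrite (ts_ext (fun _ => 0) (fun _ => 0)).
    assert (forall t, trig_sum (fun _ => 0) (fun _ => 0) k t = 0).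
    { clear. induction k; intros; cbn [trig_sum]. auto. rewrite IHk; ring. }
    rewrite H; ring.
    intros i Hi. replace (Nat.eqb i (S k)) with false. auto. symmetry. apply Nat.eqb_neq. lia. Qed.

Lemma Tn_add N f g : in_Tn N f -> in_Tn N g -> in_Tn N (fun t => f t + g t).
Proof. intros H1 H2. apply Tn_ext with (fun t => 1 * f t + 1 * g t). intros; ring.
  apply Tn_lin; auto. Qed.

Lemma Tn_cosmul N f : in_Tn N f -> in_Tn (S N) (fun t => cos t * f t).
Proof. intros [al [be Hf]].
  apply Tn_ext with (fun t => cos t * (al O + trig_sum al be N t)). intros; rewrite Hf; auto.
  clear Hf. induction N.
  - apply Tn_ext with (fun t => al O * cos (INR 1 * t)). intros; simpl. rewrite Rmult_1_l; ring.
    apply Tn_cos; auto.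
  - set (j := INR (S N)).
    apply Tn_ext with (fun t => cos t * (al O + trig_sum al be N t) +
       ((al (S N) / 2 * cos (INR (S (S N)) * t) + al (S N) / 2 * cos (INR N * t)) +
        (be (S N) / 2 * sin (INR (S (S N)) * t) + be (S N) / 2 * sin (INR N * t)))).
    + intros t. cbn [trig_sum]. fold j.
      replace (INR (S (S N)) * t) with (j * t + t) by (unfold j; rewrite !S_INR; ring).
      replace (INR N * t) with (j * t - t) by (unfold j; rewrite !S_INR; ring).
      rewrite cos_plus, cos_minus, sin_plus, sin_minus. field.
    + apply Tn_add. apply Tn_S; auto.
      apply Tn_add; apply Tn_add; (apply Tn_cos || apply Tn_sin); lia.
Qed.

Fixpoint Rp (k : nat) (x : R) : R :=
  match k with
  | O => 0
  | S k' => match k' with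
            | O => 2 * x
            | S k'' => 2 * (1 - 2 * x * x) * Rp k' x - Rp k'' x
            end
  end.

Lemma two_step (P : nat -> Prop) : P O -> P (S O) -> (forall k, P k -> P (S k) -> P (S (S k))) -> forall k, P k.
Proof. intros H0 H1 HS. assert (forall k, P k /\ P (S k)).
  { induction k. auto. destruct IHk; split; auto. }
  intros k; apply H. Qed.

Lemma Rp_sin k t : sin (INR k * t) = cos (t/2) * Rp k (sin (t/2)).
Proof. revert t. induction k using two_step; intros t.
  - simpl. rewrite Rmult_0_l, sin_0. ring.
  - simpl. rewrite Rmult_1_l. replace t with (2 * (t/2)) at 1 by field. rewrite sin_2a. ring.
  - change (Rp (S (S k)) (sin (t/2))) with (2 * (1 - 2 * sin (t/2) * sin (t/2)) * Rp (S k) (sin (t/2)) - Rp k (sin (t/2))).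
    assert (Hc: cos t = 1 - 2 * sin (t/2) * sin (t/2)).
    { replace t with (2 * (t/2)) at 1 by field. rewrite cos_2a_sin. ring. }
    replace (INR (S (S k)) * t) with (INR (S k) * t + t) by (rewrite !S_INR; ring).
    assert (E: sin (INR k * t) = sin (INR (S k) * t - t)) by (f_equal; rewrite S_INR; ring).
    rewrite sin_plus. rewrite sin_minus in E. rewrite IHk0 in *. rewrite IHk in E.
    rewrite Hc in *. nra.
Qed.

Lemma Rp_Tn k a : in_Tn (2*k) (fun p => sin p * Rp k (a * cos p)).
Proof. induction k using two_step.
  - simpl. exists (fun _ => 0), (fun _ => 0). intros; simpl; ring.
  - apply Tn_ext with (fun p => a * sin (INR 2 * p)).
    intros p. simpl. replace ((1+1) * p) with (2 * p) by ring. rewrite sin_2a. ring.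
    apply Tn_sin. lia.
  - apply Tn_ext with (fun p => 2 * (sin p * Rp (S k) (a * cos p)) + (-1) * (4 * a * a * (cos p * (cos p * (sin p * Rp (S k) (a * cos p)))) + 1 * (sin p * Rp k (a * cos p)))).
    intros p. change (Rp (S (S k)) (a * cos p)) with (2 * (1 - 2 * (a * cos p) * (a * cos p)) * Rp (S k) (a * cos p) - Rp k (a * cos p)). set (X := Rp (S k) (a * cos p)). set (Y := Rp k (a * cos p)). ring.
    apply Tn_lin. apply Tn_le with (2 * S k)%nat. lia. apply IHk0.
    apply Tn_lin. 
    replace (2 * S (S k))%nat with (S (S (2 * S k))) by lia.
    apply Tn_cosmul, Tn_cosmul, IHk0.
    apply Tn_le with (2 * k)%nat. lia. apply IHk.
Qed.

Lemma Rp_der k x : ex_derive (Rp k) x.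
Proof. revert x. induction k using two_step; intros x.
  - simpl. auto_derive. auto.
  - simpl. auto_derive. auto.
  - apply ex_derive_ext with (fun y => 2 * (1 - 2 * y * y) * Rp (S k) y - Rp k y). intros; reflexivity.
    auto_derive. auto.
Qed.

Fixpoint Rsum (be : nat -> R) (m : nat) (x : R) : R :=
  match m with O => 0 | S m' => Rsum be m' x + be (S m') * Rp (S m') x end.

Lemma ts_odd al be m t : trig_sum al be m t - trig_sum al be m (-t) = 2 * (cos (t/2) * Rsum be m (sin (t/2))).
Proof. induction m; cbn [trig_sum Rsum]. ring.
  replace (INR (S m) * - t) with (- (INR (S m) * t)) by ring.
  rewrite cos_neg, sin_neg, Rp_sin. 
  replace (trig_sum al be m t + (al (S m) * cos (INR (S m) * t) + be (S m) * (cos (t / 2) * Rp (S m) (sin (t / 2)))) -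
   (trig_sum al be m (- t) + (al (S m) * cos (INR (S m) * t) + be (S m) * - (cos (t / 2) * Rp (S m) (sin (t / 2))))))
   with ((trig_sum al be m t - trig_sum al be m (- t)) + 2 * be (S m) * (cos (t / 2) * Rp (S m) (sin (t / 2)))) by ring.
  rewrite IHm. ring. Qed.

Lemma T_rep n T : in_Tn n T -> odd_fun T -> exists be, forall t, T t = cos (t/2) * Rsum be n (sin (t/2)).
Proof. intros [al [be H]] Ho. exists be. intros t.
  assert (T t = (T t - T (-t)) / 2). { rewrite Ho. field. }
  rewrite H0, !H. replace (al 0%nat + trig_sum al be n t - (al 0%nat + trig_sum al be n (- t)))
    with (trig_sum al be n t - trig_sum al be n (- t)) by ring.
  rewrite ts_odd. field. Qed.

Lemma Rsum_der be m x : ex_derive (Rsum be m) x.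
Proof. revert x; induction m; intros x; cbn [Rsum].
  - auto_derive; auto.
  - apply ex_derive_ext with (fun y => Rsum be m y + be (S m) * Rp (S m) y). intros; reflexivity.
    apply (ex_derive_plus (Rsum be m) (fun y => be (S m) * Rp (S m) y)). apply IHm.
    apply (ex_derive_scal (Rp (S m))). apply Rp_der.
Qed.

Lemma Rsum_Tn be m a : in_Tn (2*m) (fun p => sin p * Rsum be m (a * cos p)).
Proof. induction m; cbn [Rsum].
  - exists (fun _ => 0), (fun _ => 0). intros; simpl; ring.
  - apply Tn_ext with (fun p => 1 * (sin p * Rsum be m (a * cos p)) + be (S m) * (sin p * Rp (S m) (a * cos p))).
    intros; ring. apply Tn_lin. apply Tn_le with (2*m)%nat. lia. auto. apply Rp_Tn.
Qed.

Lemma final_alg (n b sg c a x0 y0 s Rv DR D M C2 : R) :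
  1 <= n -> 0 < b -> b <= 4 -> 0 <= M ->
  0 < sg -> 0 < c -> sg * sg + c * c = 1 -> 1/2 <= c * c -> a = 2 * sg * c ->
  sg <= b / 4 -> 5 * b / 24 <= sg ->
  x0 = a * y0 -> x0 * x0 <= sg * sg -> 0 < s -> s * s = 1 - y0 * y0 ->
  C2 = 1 - x0 * x0 ->
  Rabs (s * Rv) <= M ->
  D = y0 * Rv + s * (DR * (a * - s)) -> Rabs D <= 2 * n * M ->
  Rabs (- (1/2) * x0 * Rv + (1/2) * C2 * DR) <= 9.9 / b * n * M.
Proof. intros Hn Hb Hb4 HM Hsg Hc Hsc Hc2 Ha Hsgu Hsgl Hx0 Hxs Hs Hss HC2 HG HD HDb.
  assert (Ha0 : 0 < a) by (subst; nra).
  assert (Hy : 4 * c * c * (y0 * y0) <= 1).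
  { subst x0 a. assert (sg * sg * (4 * c * c * (y0 * y0)) <= sg * sg * 1) by nra.
    apply Rmult_le_reg_l with (sg * sg). nra. lra. }
  assert (Hy2 : y0 * y0 <= 1/2) by nra.
  assert (Hs2 : 1/2 <= s * s) by lra.
  assert (Hs7 : 0.7 <= s) by nra.
  assert (Hc7 : 0.7 <= c) by nra.
  assert (Hys : Rabs y0 <= s).
  { rewrite <- (Rabs_pos_eq s) by lra. apply Rsqr_le_abs_0. unfold Rsqr. lra. }
  assert (HsRv : s * Rabs Rv <= M) by (rewrite Rabs_mult, (Rabs_pos_eq s) in HG; lra).
  assert (HyRv : Rabs (y0 * Rv) <= M).
  { rewrite Rabs_mult. apply Rle_trans with (s * Rabs Rv); auto. apply Rmult_le_compat_r; auto. apply Rabs_pos. }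
  assert (HDR : a * (s * s) * Rabs DR <= 3 * n * M).
  { assert (E: a * (s * s) * DR = y0 * Rv - D) by (rewrite HD; ring).
    assert (Rabs (a * (s * s) * DR) <= 3 * n * M).
    { rewrite E. eapply Rle_trans. apply Rabs_triang. rewrite Rabs_Ropp. nra. }
    rewrite Rabs_mult, (Rabs_pos_eq (a * (s * s))) in H; nra. }
  assert (HC43 : 3 * C2 <= 4 * (s * s)).
  { subst C2 x0 a. 
    assert (y0 * y0 * (4 - 3 * (4 * sg * sg * c * c)) <= 1).
    { assert (4 - 12 * sg * sg * c * c <= 4 * c * c) by nra. nra. }
    nra. }
  assert (HC0 : 0 <= C2) by (subst C2; nra).
  assert (HB : a * (C2 * Rabs DR) <= 4 * n * M).
  { assert (C2 * Rabs DR <= 4/3 * (s * s) * Rabs DR). apply Rmult_le_compat_r. apply Rabs_pos. lra.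
    assert (0 <= Rabs DR) by apply Rabs_pos. nra. }
  assert (HA : Rabs x0 * Rabs Rv <= sg * M / 0.7).
  { assert (Rabs x0 <= sg). { rewrite <- (Rabs_pos_eq sg) by lra. apply Rsqr_le_abs_0. unfold Rsqr. lra. }
    assert (0 <= Rabs Rv) by apply Rabs_pos. assert (0 <= Rabs x0) by apply Rabs_pos.
    assert (Rabs Rv <= M / 0.7). { apply Rmult_le_reg_l with 0.7. lra. 
      assert (0.7 * Rabs Rv <= s * Rabs Rv) by nra. lra. }
    assert (Rabs x0 * Rabs Rv <= sg * (M / 0.7)) by (apply Rmult_le_compat; auto). lra. }
  eapply Rle_trans. apply Rabs_triang.
  rewrite !Rabs_mult. rewrite (Rabs_pos_eq (1/2)) by lra. rewrite Rabs_Ropp, (Rabs_pos_eq (1/2)) by lra.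
  rewrite (Rabs_pos_eq C2) by lra.
  assert (Ha2 : 0.29 * b <= a) by nra.
  assert (HB2 : C2 * Rabs DR <= 4 * n * M / (0.29 * b)).
  { apply Rmult_le_reg_l with (0.29 * b). lra. field_simplify. 2: lra.
    assert (0 <= C2 * Rabs DR) by (apply Rmult_le_pos; auto; apply Rabs_pos). nra. }
  assert (HA2 : sg * M / 0.7 <= 5.72 * n * M / b).
  { apply Rmult_le_reg_l with (0.7 * b). nra. field_simplify; try lra. assert (b * sg <= 4) by nra. nra. }
  assert (Hfin : 1/2 * (5.72 * n * M / b) + 1/2 * (4 * n * M / (0.29 * b)) <= 9.9 / b * n * M).
  { field_simplify; try lra. apply Rmult_le_reg_l with (b * 29). lra. field_simplify; try lra. nra. }
  lra.
Qed.

Theorem lemma3p1 :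
  exists c0 : R, c0 < 10 /\
    forall (b : R) (n : nat) (T : R -> R),
      0 < b < PI -> in_Tn n T -> odd_fun T ->
      forall M : R, (forall y, -b <= y <= b -> Rabs (T y) <= M) ->
      forall x, -(b/2) <= x <= b/2 ->
        Rabs (Derive T x) <= c0 / b * INR n * M.
Proof.
  exists 9.9. split. lra.
  intros b n T Hb HT Ho M HM x Hx.
  assert (HM0 : 0 <= M).
  { assert (H0 : -b <= 0 <= b) by lra. specialize (HM 0 H0). pose proof (Rabs_pos (T 0)). lra. }
  destruct (T_rep n T HT Ho) as [be Hrep].
  set (Rs := Rsum be n) in *.
  destruct n as [|n'].
  { rewrite (Derive_ext T (fun _ => 0)). rewrite Derive_const, Rabs_R0.
    replace (9.9 / b * INR 0 * M) with 0 by (simpl; ring). lra.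
    intros t; rewrite Hrep; unfold Rs; simpl; ring. }
  set (n := S n') in *.
  assert (Hn1 : 1 <= INR n) by (apply (le_INR 1); unfold n; lia).
  pose proof PI_4 as HPI4.
  set (u := b/4). set (sg := sin u). set (c := cos u). set (a := sin (b/2)).
  assert (Hu : 0 < u < PI/4) by (unfold u; lra).
  assert (Hsg : 0 < sg) by (apply sin_gt_0; lra).
  assert (Hc : 0 < c) by (apply cos_gt_0; lra).
  assert (Hc2 : 1/2 <= c * c).
  { assert (cos (PI/4) <= c) by (apply cos_decr_1; lra). rewrite cos_PI4 in H.
    assert (Hs2 : sqrt 2 * sqrt 2 = 2) by (apply sqrt_sqrt; lra).
    assert (0 < sqrt 2) by (apply sqrt_lt_R0; lra).
    assert (1 / sqrt 2 * (1 / sqrt 2) = 1/2) by (replace (1 / sqrt 2 * (1 / sqrt 2)) with (1 / (sqrt 2 * sqrt 2)) by (field; lra); rewrite Hs2; field).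
    assert (0 < 1 / sqrt 2) by (apply Rdiv_lt_0_compat; lra). nra. }
  assert (Hsc : sg * sg + c * c = 1) by (pose proof (sin2_cos2 u); unfold Rsqr in *; auto).
  assert (Ha : a = 2 * sg * c) by (unfold a, sg, c; replace (b/2) with (2 * u) by (unfold u; field); apply sin_2a).
  assert (Ha0 : 0 < a) by (rewrite Ha; nra).
  assert (Ha1 : a <= 1) by (pose proof (SIN_bound (b/2)); unfold a; lra).
  assert (Hsgu : sg <= b / 4) by (left; apply sin_lt_x; lra).
  assert (Hsgl : 5 * b / 24 <= sg).
  { pose proof (sin_bound u 0 ltac:(lra) ltac:(lra)) as [H1 _]. unfold sin_approx, sin_term in H1. simpl in H1.
    fold sg in H1. assert (u * (u * (u * 1)) <= u) by (assert (u <= 1) by lra; nra).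
    unfold u in *. lra. }
  set (x0 := sin (x/2)).
  assert (Hxs : x0 * x0 <= sg * sg).
  { assert (x0 <= sg) by (apply sin_incr_1; unfold u in *; lra).
    assert (sin (-u) <= x0) by (apply sin_incr_1; unfold u in *; lra).
    rewrite sin_neg in H0. fold sg in H0. nra. }
  set (y0 := x0 / a).
  assert (Hx0 : x0 = a * y0) by (unfold y0; field; lra).
  assert (Hy2 : y0 * y0 <= 1/2).
  { assert (4 * c * c * (y0 * y0) <= 1).
    { rewrite Hx0, Ha in Hxs. apply Rmult_le_reg_l with (sg * sg). nra. nra. }
    nra. }
  assert (Hy1 : -1 <= y0 <= 1) by nra.
  set (p0 := acos y0).
  assert (Hcp : cos p0 = y0) by (apply cos_acos; auto).
  set (s := sin p0).
  assert (Hs : s = sqrt (1 - y0²)) by (apply sin_acos; auto).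
  assert (Hs0 : 0 < s) by (rewrite Hs; apply sqrt_lt_R0; unfold Rsqr; lra).
  assert (Hss : s * s = 1 - y0 * y0) by (rewrite Hs; rewrite sqrt_sqrt; unfold Rsqr; lra).
  set (G := fun p => sin p * Rs (a * cos p)).
  assert (HGT : in_Tn (2 * n) G) by apply Rsum_Tn.
  assert (HGb : forall p, Rabs (G p) <= M).
  { intros p. unfold G. set (z := a * cos p).
    pose proof (COS_bound p).
    assert (Hz : -1 <= z <= 1) by (unfold z; split; nra).
    assert (Hz2 : z² <= (cos p)²) by (unfold z, Rsqr; assert (a * a <= 1) by nra; assert (0 <= cos p * cos p) by nra; nra).
    assert (Hasu : asin z <= b/2).
    { pose proof (asin_bound z). apply sin_incr_0; try lra. rewrite sin_asin by auto. fold a. unfold z. nra. }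
    assert (Hasl : -(b/2) <= asin z).
    { pose proof (asin_bound z). apply sin_incr_0; try lra. rewrite sin_asin by auto. rewrite sin_neg. fold a. unfold z. nra. }
    assert (HTt : T (2 * asin z) = sqrt (1 - z²) * Rs z).
    { rewrite Hrep. replace (2 * asin z / 2) with (asin z) by field. rewrite cos_asin, sin_asin; auto. }
    specialize (HM (2 * asin z) ltac:(lra)). rewrite HTt in HM.
    assert (Hsp : Rabs (sin p) <= sqrt (1 - z²)).
    { rewrite <- sqrt_Rsqr_abs. apply sqrt_le_1_alt. pose proof (sin2_cos2 p). lra. }
    rewrite Rabs_mult. rewrite Rabs_mult, (Rabs_pos_eq (sqrt _)) in HM by apply sqrt_pos.
    eapply Rle_trans; [|apply HM]. apply Rmult_le_compat_r. apply Rabs_pos. auto. }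
  set (DR := Derive Rs x0).
  assert (HRd : forall z, ex_derive Rs z) by (intros; apply Rsum_der).
  assert (Hphi : a * cos p0 = x0) by (rewrite Hcp; auto).
  set (D := y0 * Rs x0 + s * (DR * (a * - s))).
  assert (HGd : is_derive G p0 D).
  { unfold G. auto_derive. apply HRd. rewrite Hphi, Hcp. fold s. fold DR. unfold D. change (Derive (fun x1 => Rs x1) x0) with DR. ring. }
  assert (HDb : Rabs D <= 2 * INR n * M).
  { replace (2 * INR n * M) with (INR (2 * n) * M) by (rewrite mult_INR; simpl; ring).
    apply (bernstein (2 * n) G M p0 D); auto. unfold n; lia. }
  assert (HG0 : Rabs (s * Rs x0) <= M).
  { specialize (HGb p0). unfold G in HGb. rewrite Hphi in HGb. auto. }
  assert (HTd : Derive T x = - (1/2) * x0 * Rs x0 + (1/2) * (cos (x/2) * cos (x/2)) * DR).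
  { rewrite (Derive_ext T (fun t => cos (t/2) * Rs (sin (t/2)))) by (intros; apply Hrep).
    apply is_derive_unique. auto_derive. apply HRd. change (x * / 2) with (x / 2). fold x0. change (Derive (fun x1 => Rs x1) x0) with DR. change (RinvImpl.Rinv 2) with (/ 2). field. }
  rewrite HTd.
  apply (final_alg (INR n) b sg c a x0 y0 s (Rs x0) DR D M); auto; try lra.
  pose proof (sin2_cos2 (x/2)). unfold Rsqr in H. fold x0 in H. lra.
Qed.
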